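(* Let $p$ be a prime and $m\ge 0$ an integer, and let $C_m=\{a\in\mathbb{Z}_p:\delta^m a=0\}$. Then the composition $C_m\subset\mathbb{Z}_p\to\mathbb{Z}_p/p^m\mathbb{Z}_p$ of the inclusion with the reduction map is a bijection.
   Context: $\mathbb{Z}_p$ is the ring of $p$-adic integers, $\delta:\mathbb{Z}_p\to\mathbb{Z}_p$ is the Fermat quotient operator $\delta a=(a-a^p)/p$, and $\delta^m$ is its $m$-th iterate ($\delta^0$ is the identity). *)

(* Defs.v *)
(* The ring Z_p of p-adic integers, built as the inverse
   limit of Z/p^n: an element is a coherent sequence of residues
   x_n in [0, p^n) with x_n = x_{n+1} mod p^n. *)
From mathcomp Require Import all_boot.
From Stdlib Require Import ClassicalEpsilon.
Set Implicit Arguments. Unset Strict Implicit. Unset Printing Implicit Defensive.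

Definition coherent (p : nat) (x : nat -> nat) : Prop :=
  forall n, x n = x n.+1 %% p ^ n.

Record Zp (p : nat) := MkZp { zval : nat -> nat; zcoh : coherent p zval }.

Lemma mod_up (p n z : nat) : z %% p ^ n.+1 %% p ^ n = z %% p ^ n.
Proof. by apply: modn_dvdm; rewrite expnS; apply: dvdn_mull. Qed.

Definition natZ_seq (p k : nat) (n : nat) := k %% p ^ n.
Lemma natZ_coh p k : coherent p (natZ_seq p k).
Proof. by move=> n; rewrite /natZ_seq mod_up. Qed.
Definition natZ (p k : nat) : Zp p := MkZp (natZ_coh p k).

Definition addZ_seq p (x y : Zp p) (n : nat) := (zval x n + zval y n) %% p ^ n.
Lemma addZ_coh p (x y : Zp p) : coherent p (addZ_seq x y).
Proof.
by move=> n; rewrite /addZ_seq (zcoh x n) (zcoh y n) mod_up modnDm.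
Qed.
Definition addZ p (x y : Zp p) : Zp p := MkZp (addZ_coh x y).

Definition mulZ_seq p (x y : Zp p) (n : nat) := (zval x n * zval y n) %% p ^ n.
Lemma mulZ_coh p (x y : Zp p) : coherent p (mulZ_seq x y).
Proof.
by move=> n; rewrite /mulZ_seq (zcoh x n) (zcoh y n) mod_up modnMm.
Qed.
Definition mulZ p (x y : Zp p) : Zp p := MkZp (mulZ_coh x y).

Definition expZ p (a : Zp p) (k : nat) : Zp p := iter k (mulZ a) (natZ p 1).

(* Fermat quotient: delta a = (a - a^p)/p, i.e. the (unique, since p is not a
   zero divisor and a = a^p mod p) b with p * b + a^p = a. *)
Definition delta p (a : Zp p) : Zp p :=
  epsilon (inhabits (natZ p 0))
    (fun b => addZ (mulZ (natZ p p) b) (expZ a p) = a).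

(* a = b in Z_p / p^m Z_p, i.e. a - b lies in the ideal p^m Z_p *)
Definition congrZ p (m : nat) (a b : Zp p) : Prop :=
  exists c : Zp p, a = addZ b (mulZ (natZ p (p ^ m)) c).

Definition Cm p (m : nat) (a : Zp p) : Prop := iter m (@delta p) a = natZ p 0.

(* Main.v *)
Set Warnings "-notation-overridden,-ambiguous-paths,-deprecated".
From mathcomp Require Import all_boot all_algebra zify ring.
From Stdlib Require Import ClassicalEpsilon FunctionalExtensionality ProofIrrelevance.
Require Import Defs.
Import GRing.Theory Num.Theory.
Local Open Scope ring_scope.

Lemma dvdzD' (d a b : int) : (d %| a)%Z -> (d %| b)%Z -> (d %| a + b)%Z.
Proof. by case/dvdzP=> u ->; case/dvdzP=> v ->; apply/dvdzP; exists (u+v); ring. Qed.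
Lemma dvdzB' (d a b : int) : (d %| a)%Z -> (d %| b)%Z -> (d %| a - b)%Z.
Proof. by case/dvdzP=> u ->; case/dvdzP=> v ->; apply/dvdzP; exists (u-v); ring. Qed.

Lemma pow_diff (y z : int) n : (z %| (y+z)^+n - y^+n)%Z.
Proof.
elim: n => [|n IH]; first by rewrite !expr0 subrr dvdz0.
case/dvdzP: IH => q Hq; apply/dvdzP; exists ((y+z)*q + y^+n).
have -> : (y + z) ^+ n.+1 - y ^+ n.+1 = (y+z) * ((y + z) ^+ n - y ^+ n) + z * y^+n by rewrite !exprS; ring.
rewrite Hq; ring.
Qed.

Lemma pow_diff2 (y z : int) n :
  (z^+2 %| (y+z)^+n.+1 - y^+n.+1 - n.+1%:R * z * y^+n)%Z.
Proof.
elim: n => [|n IH].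
  by rewrite !expr1 expr0 mulr1 mul1r; have -> : y + z - y - z = 0 by ring.
case/dvdzP: IH => q Hq; apply/dvdzP; exists ((y+z)*q + n.+1%:R * y^+n).
have -> : (y + z) ^+ n.+2 - y ^+ n.+2 - n.+2%:R * z * y ^+ n.+1 =
   (y+z) * ((y + z) ^+ n.+1 - y ^+ n.+1 - n.+1%:R * z * y ^+ n) + n.+1%:R * z^+2 * y^+n.
  rewrite !(exprS _ n.+1) !exprS -[n.+2]addn1 -[n.+1]addn1 !natrD; ring.
rewrite Hq; ring.
Qed.

Lemma fermatz (p : nat) (x : int) : prime p -> (p%:Z %| x - x^+p)%Z.
Proof.
move=> hp.
have p0 : p%:Z != 0 by rewrite eqz_nat; case: p hp.
set r := (x %% p%:Z)%Z.
have r0 : 0 <= r by rewrite modz_ge0.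
have xr : x = r + (x %/ p%:Z)%Z * p%:Z by rewrite /r addrC -divz_eq.
have [rn rE] : exists rn : nat, r = rn%:Z by exists `|r|%N; rewrite gez0_abs.
have h1 : (p%:Z %| x^+p - r^+p)%Z.
  rewrite xr; apply: dvdz_trans (pow_diff _ _ _); exact: dvdz_mull.
have h2 : (p%:Z %| r - r^+p)%Z.
  rewrite rE -eqz_mod_dvd -natz -natrX !natz !modz_nat; apply/eqP.
  by rewrite (fermat_little rn hp).
have h3 : (p%:Z %| x - r)%Z by apply/dvdzP; exists (x %/ p%:Z)%Z; lia.
have -> : x - x^+p = (x - r) + (r - r^+p) - (x^+p - r^+p) by ring.
by apply: dvdzB'; first apply: dvdzD'.
Qed.

Lemma powk (p k : nat) (y t : int) : prime p ->
  ((p%:Z)^+k.+2 %| (y + p%:Z^+k.+1 * t)^+p - y^+p)%Z.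
Proof.
move=> hp; have [n pn] : exists n, p = n.+1 by exists p.-1; rewrite prednK // prime_gt0.
have := pow_diff2 y (p%:Z^+k.+1 * t) n; rewrite -pn natz.
case/dvdzP => q Hq.
apply/dvdzP; exists (q * p%:Z^+k * t^+2 + t * y^+n).
have -> : (y + p%:Z^+k.+1 * t)^+p - y^+p = q * (p%:Z ^+ k.+1 * t) ^+ 2 + p%:Z * (p%:Z ^+ k.+1 * t) * y ^+ n by lia.
rewrite !exprS; ring.
Qed.

Definition Dz (p : nat) (x : int) : int := ((x - x ^+ p) %/ p%:Z)%Z.

Lemma Dz_spec p x : prime p -> Dz p x * p%:Z = x - x^+p.
Proof. by move=> hp; rewrite /Dz divzK // fermatz. Qed.

Lemma Dz_step p k y t : prime p ->
  (p%:Z^+k.+1 %| Dz p (y + p%:Z^+k.+1 * t) - Dz p y - p%:Z^+k * t)%Z.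
Proof.
move=> hp.
have p0 : p%:Z != 0 by rewrite eqz_nat; case: p hp.
rewrite -(@dvdz_mul2r p%:Z _ _ p0).
case/dvdzP: (powk p k y t hp) => q Hq.
apply/dvdzP; exists (-q).
have e1 := Dz_spec p (y + p%:Z ^+ k.+1 * t) hp.
have e2 := Dz_spec p y hp.
have -> : p%:Z ^+ k.+1 * p%:Z = p%:Z ^+ k.+2 by rewrite (exprS _ k.+1) mulrC.
have -> : (Dz p (y + p%:Z ^+ k.+1 * t) - Dz p y - p%:Z ^+ k * t) * p%:Z = Dz p (y + p%:Z ^+ k.+1 * t) * p%:Z - Dz p y * p%:Z - p%:Z ^+ k.+1 * t by rewrite exprS; ring.
lia.
Qed.

Lemma Dz_iter p j k y t : prime p ->
  (p%:Z^+k.+1 %| iter j (Dz p) (y + p%:Z^+(k+j) * t) - iter j (Dz p) y - p%:Z^+k * t)%Z.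
Proof.
move=> hp; elim: j k t => [|j IH] k t.
  by rewrite /= addn0; apply/dvdzP; exists 0; ring.
case/dvdzP: (IH k.+1 t) => s Hs.
rewrite !iterS -addSnnS.
set Y := iter j (Dz p) y.
have -> : iter j (Dz p) (y + p%:Z ^+ (k.+1 + j) * t) = Y + p%:Z^+k.+1 * (t + s * p%:Z)
  by rewrite (exprS _ k.+1) in Hs; lia.
case/dvdzP: (Dz_step p k Y (t + s * p%:Z) hp) => u Hu.
apply/dvdzP; exists (u + s).
rewrite (exprS _ k) in Hu *; move: Hu; move: (Dz p (Y + _)) (Dz p Y) => A B Hu; lia.
Qed.
Set Implicit Arguments. Unset Strict Implicit.

Definition cong (d a b : int) := (d %| a - b)%Z.

Lemma crefl d a : cong d a a.
Proof. by rewrite /cong subrr dvdz0. Qed.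
Lemma csym d a b : cong d a b -> cong d b a.
Proof. by case/dvdzP=> u H; apply/dvdzP; exists (-u); lia. Qed.
Lemma ctrans d a b c : cong d a b -> cong d b c -> cong d a c.
Proof. by case/dvdzP=> u H; case/dvdzP=> v H'; apply/dvdzP; exists (u+v); lia. Qed.
Lemma cweak d d' a b : (d %| d')%Z -> cong d' a b -> cong d a b.
Proof. by move=> h1 h2; apply: dvdz_trans h1 h2. Qed.
Lemma cexp (p : int) n k a b : (n <= k)%N -> cong (p^+k) a b -> cong (p^+n) a b.
Proof. by move=> h; apply: cweak; apply: dvdz_exp2l. Qed.

Lemma PoszX (a k : nat) : ((a ^ k)%N)%:Z = (a%:Z) ^+ k.
Proof. by rewrite -!natz natrX. Qed.

Lemma nat_cong (a b d : nat) : (a %% d = b %% d)%N -> cong d%:Z a%:Z b%:Z.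
Proof. by move=> h; rewrite /cong -eqz_mod_dvd !modz_nat h. Qed.

Lemma cong_nat (a b d : nat) : cong d%:Z a%:Z b%:Z -> (a %% d = b %% d)%N.
Proof. by rewrite /cong -eqz_mod_dvd !modz_nat => /eqP [->]. Qed.

Lemma small_eq (a b d : nat) : (a < d)%N -> (b < d)%N -> cong d%:Z a%:Z b%:Z -> a = b.
Proof. by move=> ha hb /cong_nat; rewrite !modn_small. Qed.

Definition resid (z : int) (d : nat) : nat := `|(z %% d%:Z)%Z|%N.

Lemma resid_lt z d : (0 < d)%N -> (resid z d < d)%N.
Proof.
move=> d0; rewrite /resid -ltz_nat gez0_abs ?modz_ge0 ?ltz_pmod //.
by rewrite eqz_nat -lt0n.
Qed.

Lemma resid_cong z d : (0 < d)%N -> cong d%:Z (resid z d)%:Z z.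
Proof.
move=> d0; have dn : d%:Z != 0 by rewrite eqz_nat -lt0n.
rewrite /resid gez0_abs ?modz_ge0 //.
apply/dvdzP; exists (- (z %/ d%:Z)%Z); rewrite {2}(divz_eq z d%:Z); ring.
Qed.

Lemma pexp_gt0 p n : prime p -> (0 < p ^ n)%N.
Proof. by move=> hp; rewrite expn_gt0 prime_gt0. Qed.

Lemma zval_lt p (x : Zp p) n : prime p -> (zval x n < p ^ n)%N.
Proof. by move=> hp; rewrite (zcoh x n) ltn_mod pexp_gt0. Qed.

Lemma zval_mod p (x : Zp p) n k : prime p -> (n <= k)%N -> zval x n = (zval x k %% p ^ n)%N.
Proof.
move=> hp /subnKC <-; elim: (k - n)%N => [|d IH].
  by rewrite addn0 modn_small // zval_lt.
rewrite IH (zcoh x (n + d)) addnS modn_dvdm //.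
by apply: dvdn_exp2l; apply: leq_addr.
Qed.

Lemma Zp_ext p (x y : Zp p) : (forall n, zval x n = zval y n) -> x = y.
Proof.
case: x y => [f hf] [g hg] /= H.
have e : f = g := functional_extensionality _ _ H.
subst g; f_equal; apply: proof_irrelevance.
Qed.

Lemma zcong p (x : Zp p) n k : prime p -> (n <= k)%N ->
  cong (p%:Z ^+ n) (zval x k)%:Z (zval x n)%:Z.
Proof.
move=> hp nk; rewrite -PoszX; apply: nat_cong.
by rewrite (zval_mod x hp nk) modn_mod.
Qed.

Lemma zval_exp p (x : Zp p) k n : zval (expZ x k) n = ((zval x n) ^ k %% p ^ n)%N.
Proof.
elim: k => [|k IH] //=.
by rewrite /mulZ_seq IH modnMmr expnS.
Qed.

Definition dseq p (x : Zp p) n : nat := resid (Dz p (zval x n.+1)%:Z) (p ^ n).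

Lemma dseq_cong p (x : Zp p) n : prime p ->
  cong (p%:Z ^+ n) (dseq x n)%:Z (Dz p (zval x n.+1)%:Z).
Proof. by move=> hp; rewrite -PoszX; apply: resid_cong; apply: pexp_gt0. Qed.

Lemma Dz_cong p n a b : prime p -> cong (p%:Z ^+ n.+1) a b -> cong (p%:Z ^+ n) (Dz p a) (Dz p b).
Proof.
move=> hp /dvdzP [t Ht].
have -> : a = b + p%:Z ^+ n.+1 * t by lia.
case/dvdzP: (Dz_step p n b t hp) => u Hu.
apply/dvdzP; exists (u * p%:Z + t).
rewrite (exprS _ n) in Hu *; move: Hu; move: (Dz p (b + _)) (Dz p b) => A B Hu; lia.
Qed.

Lemma dseq_coh p (x : Zp p) : prime p -> coherent p (dseq x).
Proof.
move=> hp n; apply: (@small_eq _ _ (p ^ n)).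
- by apply: resid_lt; apply: pexp_gt0.
- by rewrite ltn_mod pexp_gt0.
rewrite PoszX.
apply: ctrans (dseq_cong x n hp) _.
apply: ctrans (_ : cong _ _ (Dz p (zval x n.+2)%:Z)) _.
  by apply: Dz_cong => //; apply: csym; apply: zcong.
apply: ctrans (_ : cong _ _ (dseq x n.+1)%:Z) _.
  by apply: (@cexp _ n n.+1) => //; apply: csym; apply: dseq_cong.
by rewrite -PoszX; apply: nat_cong; rewrite modn_mod.
Qed.

Definition dZ p (x : Zp p) (hp : prime p) : Zp p := MkZp (dseq_coh x hp).

Lemma dZ_spec p (x : Zp p) (hp : prime p) :
  addZ (mulZ (natZ p p) (dZ x hp)) (expZ x p) = x.
Proof.
apply: Zp_ext => n /=.
rewrite /addZ_seq /= /mulZ_seq /natZ_seq /= zval_exp modnMml modnDm.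
rewrite -[RHS](@modn_small _ (p ^ n)); last exact: zval_lt.
apply: cong_nat; rewrite PoszX PoszD PoszM PoszX.
have h1 := dseq_cong x n hp.
have h2 := Dz_spec p (zval x n.+1)%:Z hp.
have /dvdzP [t Ht] := zcong x hp (leqnSn n).
have /dvdzP [u Hu] := pow_diff (zval x n)%:Z (t * p%:Z ^+ n) p.
have /dvdzP [q Hq] := h1.
have e : (zval x n.+1)%:Z = (zval x n)%:Z + t * p%:Z ^+ n by lia.
rewrite -e in Hu.
apply/dvdzP; exists (p%:Z * q + t - u * t).
move: Hq h2 Hu Ht; rewrite /dseq; clear e h1.
move: (resid (Dz p (zval x n.+1)%:Z) (p ^ n)) => B.
move: (Dz p (zval x n.+1)%:Z) => D.
move: ((zval x n.+1)%:Z ^+ p) ((zval x n)%:Z ^+ p) => X1p Xp.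
move: (zval x n.+1)%:Z (zval x n)%:Z => X1 X0.
move=> *; lia.
Qed.

Lemma pZ0 p : prime p -> p%:Z != 0.
Proof. by move=> hp; rewrite eqz_nat; case: p hp. Qed.

Lemma zval_delta p (x : Zp p) n : prime p ->
  cong (p%:Z ^+ n) (zval (delta x) n)%:Z (Dz p (zval x n.+1)%:Z).
Proof.
move=> hp.
have hd : addZ (mulZ (natZ p p) (delta x)) (expZ x p) = x.
  by rewrite /delta; apply: (epsilon_spec (inhabits (natZ p 0)) (fun b => addZ (mulZ (natZ p p) b) (expZ x p) = x)); exists (dZ x hp); apply: dZ_spec.
have := congr1 (fun z => zval z n.+1) (etrans hd (esym (dZ_spec x hp))).
rewrite /= /addZ_seq /= /mulZ_seq /natZ_seq /= modnMml modnMml -modnDml -[in RHS]modnDml.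
move/eqP; rewrite eqn_modDr !modn_mod => /eqP /nat_cong; rewrite PoszX !PoszM /cong -mulrBr exprS.
rewrite dvdz_mul2l ?pZ0 // => h.
apply: ctrans (_ : cong _ _ (zval (delta x) n.+1)%:Z) _.
  by apply: csym; apply: zcong.
apply: ctrans (_ : cong _ _ (dseq x n.+1)%:Z) _; first exact: h.
apply: ctrans (_ : cong _ _ (dseq x n)%:Z) _; last exact: dseq_cong.
have := zcong (dZ x hp) hp (leqnSn n); done.
Qed.

Lemma zval_iter p (x : Zp p) j n : prime p ->
  cong (p%:Z ^+ n) (zval (iter j (@delta p) x) n)%:Z (iter j (Dz p) (zval x (n + j))%:Z).
Proof.
move=> hp; elim: j n => [|j IH] n; first by rewrite addn0; apply: crefl.
rewrite !iterS.
apply: ctrans (zval_delta _ _ hp) _.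
rewrite addnS -addSn.
by apply: Dz_cong => //; apply: IH.
Qed.

Lemma Cm_iff p m (a : Zp p) : prime p ->
  Cm m a <-> (forall n, cong (p%:Z ^+ n) (iter m (Dz p) (zval a (n + m))%:Z) 0).
Proof.
move=> hp; split.
  move=> H n; have := zval_iter a m n hp; rewrite H /= /natZ_seq mod0n.
  by move=> h; apply: csym.
move=> H; apply: Zp_ext => n /=; rewrite /natZ_seq mod0n.
apply: (@small_eq _ _ (p ^ n)); [exact: zval_lt | exact: pexp_gt0 |].
rewrite PoszX; apply: ctrans (zval_iter a m n hp) _; exact: H.
Qed.

Lemma congrZ_lvl p m (a b : Zp p) : prime p -> congrZ m a b -> zval a m = zval b m.
Proof.
move=> hp [c ->] /=; rewrite /addZ_seq /= /mulZ_seq /=; rewrite /natZ_seq modnn mul0n mod0n addn0.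
by rewrite modn_small // zval_lt.
Qed.

Definition Wq p m (a b : Zp p) n : int :=
  (((zval a (n + m))%:Z - (zval b (n + m))%:Z) %/ (p%:Z ^+ m))%Z.

Lemma Wq_spec p m (a b : Zp p) n : prime p -> zval a m = zval b m ->
  Wq m a b n * p%:Z ^+ m = (zval a (n + m))%:Z - (zval b (n + m))%:Z.
Proof.
move=> hp hab; rewrite /Wq divzK //.
have h1 := zcong a hp (leq_addl n m).
have h2 := zcong b hp (leq_addl n m).
rewrite hab in h1.
by have := ctrans h1 (csym h2).
Qed.

Lemma Wq_cong p m (a b : Zp p) n : prime p -> zval a m = zval b m ->
  cong (p%:Z ^+ n) (Wq m a b n.+1) (Wq m a b n).
Proof.
move=> hp hab.
have pm0 : p%:Z ^+ m != 0 by rewrite expf_neq0 // pZ0.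
rewrite /cong -(@dvdz_mul2r _ _ _ pm0) mulrBl !Wq_spec // -exprD.
have h1 := zcong a hp (leqnSn (n + m)).
have h2 := zcong b hp (leqnSn (n + m)).
case/dvdzP: h1 => u Hu; case/dvdzP: h2 => v Hv.
apply/dvdzP; exists (u - v); rewrite addSn; lia.
Qed.

Definition cseq p m (a b : Zp p) n : nat := resid (Wq m a b n) (p ^ n).

Lemma cseq_cong p m (a b : Zp p) n : prime p ->
  cong (p%:Z ^+ n) (cseq m a b n)%:Z (Wq m a b n).
Proof. by move=> hp; rewrite -PoszX; apply: resid_cong; apply: pexp_gt0. Qed.

Lemma cseq_coh p m (a b : Zp p) : prime p -> zval a m = zval b m -> coherent p (cseq m a b).
Proof.
move=> hp hab n; apply: (@small_eq _ _ (p ^ n)).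
- by apply: resid_lt; apply: pexp_gt0.
- by rewrite ltn_mod pexp_gt0.
rewrite PoszX.
apply: ctrans (cseq_cong m a b n hp) _.
apply: ctrans (_ : cong _ _ (Wq m a b n.+1)) _.
  by apply: csym; apply: Wq_cong.
apply: ctrans (_ : cong _ _ (cseq m a b n.+1)%:Z) _.
  by apply: (@cexp _ n n.+1) => //; apply: csym; apply: cseq_cong.
by rewrite -PoszX; apply: nat_cong; rewrite modn_mod.
Qed.

Lemma lvl_congrZ p m (a b : Zp p) : prime p -> zval a m = zval b m -> congrZ m a b.
Proof.
move=> hp hab; exists (MkZp (cseq_coh hp hab)).
apply: Zp_ext => n /=; rewrite /addZ_seq /= /mulZ_seq /=; rewrite /natZ_seq modnMml modnDmr.
rewrite -[LHS](@modn_small _ (p ^ n)); last exact: zval_lt.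
apply: cong_nat; rewrite PoszD PoszM !PoszX.
have /dvdzP [r Hr] := cseq_cong m a b n hp.
have hW := Wq_spec n hp hab.
have /dvdzP [al Ha] := zcong a hp (leq_addr m n).
have /dvdzP [be Hb] := zcong b hp (leq_addr m n).
apply/dvdzP; exists (be - al - r * p%:Z ^+ m).
move: Hr hW Ha Hb; move: (Wq m a b n) (cseq m a b n)%:Z => Q C.
move: (p%:Z ^+ m) (p%:Z ^+ n) => Pm Pn.
move=> *; lia.
Qed.

Lemma Dm_cong p m n x y : prime p -> cong (p%:Z ^+ (n + m)) x y ->
  cong (p%:Z ^+ n) (iter m (Dz p) x) (iter m (Dz p) y).
Proof.
move=> hp /dvdzP [t Ht].
have -> : x = y + p%:Z ^+ (n + m) * t by lia.
have h := Dz_iter p m n y t hp.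
have h' : cong (p%:Z ^+ n) (iter m (Dz p) (y + p%:Z ^+ (n + m) * t) - iter m (Dz p) y - p%:Z ^+ n * t) 0.
  by rewrite /cong subr0; apply: (@cexp _ n n.+1).
case/dvdzP: h' => u Hu; apply/dvdzP; exists (u + t).
move: Hu; move: (iter m (Dz p) _) (iter m (Dz p) y) => A B; lia.
Qed.

Lemma inj_part p m (a b : Zp p) : prime p -> Cm m a -> Cm m b -> congrZ m a b -> a = b.
Proof.
move=> hp ha hb hab; have e := congrZ_lvl hp hab.
have /(Cm_iff m a hp) Ha := ha.
have /(Cm_iff m b hp) Hb := hb.
have H : forall d, zval a (m + d) = zval b (m + d).
  elim=> [|d IH]; first by rewrite addn0.
  apply: (@small_eq _ _ (p ^ (m + d.+1))); [exact: zval_lt | exact: zval_lt |].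
  have h1 := zcong a hp (leqnSn (m + d)).
  have h2 := zcong b hp (leqnSn (m + d)).
  rewrite IH in h1.
  have /dvdzP [t Ht] := ctrans h1 (csym h2).
  set y := (zval b (m + d).+1)%:Z in Ht h2.
  have ea : (zval a (m + d).+1)%:Z = y + p%:Z ^+ (d + m) * t by rewrite (addnC d m); lia.
  have hDa := Ha d.+1; have hDb := Hb d.+1.
  rewrite addSn (addnC d m) ea in hDa.
  rewrite addSn (addnC d m) -/y in hDb.
  have hD := Dz_iter p m d y t hp.
  have hpt : cong (p%:Z ^+ d.+1) (p%:Z ^+ d * t) 0.
    move: hDa hDb hD; rewrite /cong !subr0.
    move: (iter m (Dz p) (y + _)) (iter m (Dz p) y) => A B.
    case/dvdzP=> u1 H1; case/dvdzP=> u2 H2; case/dvdzP=> u3 H3.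
    apply/dvdzP; exists (u1 - u2 - u3); lia.
  move: hpt; rewrite /cong subr0 exprSr dvdz_mul2l; last first.
    by rewrite expf_neq0 // pZ0.
  case/dvdzP => s Hs.
  rewrite PoszX /cong addnS ea -/y; apply/dvdzP; exists s.
  rewrite Hs (addnC d m) exprS; ring.
apply: Zp_ext => n.
case: (leqP m n) => hmn.
  by rewrite -(subnKC hmn); apply: H.
by rewrite (zval_mod a hp (ltnW hmn)) (zval_mod b hp (ltnW hmn)) e.
Qed.

Definition ccoef (p m j : nat) (x : int) : int :=
  ((- (iter m (Dz p) x %/ (p%:Z ^+ j))%Z) %% p%:Z)%Z.

Fixpoint gs (p m : nat) (b0 : int) (j : nat) : int :=
  match j with
  | 0 => b0
  | j'.+1 => gs p m b0 j' + p%:Z ^+ (j' + m) * ccoef p m j' (gs p m b0 j')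
  end.

Lemma gs_inv p m b0 j : prime p -> cong (p%:Z ^+ j) (iter m (Dz p) (gs p m b0 j)) 0.
Proof.
move=> hp; elim: j => [|j IH]; first by rewrite expr0 /cong dvd1z.
rewrite /=; set y := gs p m b0 j; set c := ccoef p m j y.
have hD := Dz_iter p m j y c hp.
move: IH; rewrite -/y /cong subr0 => IH.
have eE := divzK IH.
have ec := divz_eq (- (iter m (Dz p) y %/ p%:Z ^+ j)%Z) p%:Z.
rewrite -/(ccoef p m j y) -/c in ec.
case/dvdzP: hD => u Hu.
apply/dvdzP; exists (u - ((- (iter m (Dz p) y %/ p%:Z ^+ j)%Z) %/ p%:Z)%Z).
move: Hu eE ec; move: (iter m (Dz p) (y + _)) (iter m (Dz p) y) => A B.
move: (B %/ p%:Z ^+ j)%Z => e.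
move: ((- e) %/ p%:Z)%Z => f.
rewrite exprS; move: (p%:Z ^+ j) => Pj.
move=> Hu eE ec; have ec2 : c = - e - f * p%:Z by lia.
rewrite ec2 in Hu; lia.
Qed.

Definition aseq p m (b0 : int) k : nat := resid (gs p m b0 (k - m)) (p ^ k).

Lemma aseq_cong p m b0 k : prime p -> cong (p%:Z ^+ k) (aseq p m b0 k)%:Z (gs p m b0 (k - m)).
Proof. by move=> hp; rewrite -PoszX; apply: resid_cong; apply: pexp_gt0. Qed.

Lemma gs_step p m b0 k : cong (p%:Z ^+ k) (gs p m b0 (k.+1 - m)) (gs p m b0 (k - m)).
Proof.
case: (leqP m k) => hmk.
  rewrite subSn //= subnK //; apply/dvdzP; exists (ccoef p m (k - m) (gs p m b0 (k - m))).
  ring.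
have h1 : (k.+1 - m = 0)%N by apply/eqP; rewrite subn_eq0.
have h2 : (k - m = 0)%N by apply/eqP; rewrite subn_eq0 ltnW.
rewrite h1 h2.
exact: crefl.
Qed.

Lemma aseq_coh p m b0 : prime p -> coherent p (aseq p m b0).
Proof.
move=> hp n; apply: (@small_eq _ _ (p ^ n)).
- by apply: resid_lt; apply: pexp_gt0.
- by rewrite ltn_mod pexp_gt0.
rewrite PoszX.
apply: ctrans (aseq_cong m b0 n hp) _.
apply: ctrans (_ : cong _ _ (gs p m b0 (n.+1 - m))) _.
  by apply: csym; apply: gs_step.
apply: ctrans (_ : cong _ _ (aseq p m b0 n.+1)%:Z) _.
  by apply: (@cexp _ n n.+1) => //; apply: csym; apply: aseq_cong.
by rewrite -PoszX; apply: nat_cong; rewrite modn_mod.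
Qed.

Lemma surj_part p m (b : Zp p) : prime p -> exists a : Zp p, Cm m a /\ congrZ m a b.
Proof.
move=> hp; exists (MkZp (aseq_coh m (zval b m)%:Z hp)); split.
  apply/(Cm_iff m _ hp) => n /=.
  apply: ctrans (_ : cong _ _ (iter m (Dz p) (gs p m (zval b m)%:Z n))) _; last first.
    exact: gs_inv.
  apply: Dm_cong => //.
  have := aseq_cong m (zval b m)%:Z (n + m) hp; by rewrite addnK.
apply: lvl_congrZ => //=.
rewrite /aseq subnn /= /resid modz_nat /= modn_small //; exact: zval_lt.
Qed.

Unset Implicit Arguments.
Local Close Scope ring_scope.

Theorem lemma4p1 (p m : nat) (hp : prime p) :
  (forall a b : Zp p, Cm m a -> Cm m b -> congrZ m a b -> a = b) /\
  (forall b : Zp p, exists a : Zp p, Cm m a /\ congrZ m a b).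
Proof.
split.
  by move=> a b; apply: inj_part.
by move=> b; apply: surj_part.
Qed.
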